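(* Let $n\ge 2$. The function $\mathbf{H}$ is shift-invariant and homogeneous (of order 1): $\mathbf{H}(x_1+r,\dots,x_n+r)=\mathbf{H}(\mathbf{x})+r$ whenever $r\in[-1,1]$, $(x_1+r,\dots,x_n+r)\in[0,1]^n$ and $\mathbf{H}(\mathbf{x})+r\in[0,1]$; and $\mathbf{H}(\lambda x_1,\dots,\lambda x_n)=\lambda\mathbf{H}(\mathbf{x})$ for all $\lambda\in[0,1]$ and $\mathbf{x}\in[0,1]^n$.
   Context: For $\mathbf{x}\in[0,1]^n$ let $x_{(1)}\ge\dots\ge x_{(n)}$ be its entries in decreasing order, and define the median $Med(\mathbf{x})=\frac12(x_{(k)}+x_{(k+1)})$ if $n=2k$ and $Med(\mathbf{x})=x_{(k+1)}$ if $n=2k+1$. Define $f_i(\mathbf{x})=\frac1n$ if $x_1=\dots=x_n$, and otherwise $f_i(\mathbf{x})=\frac{1}{n-1}\Big(1-\frac{|x_i-Med(\mathbf{x})|}{\sum_{j=1}^n|x_j-Med(\mathbf{x})|}\Big)$. Then $\mathbf{H}(\mathbf{x})=\sum_{i=1}^n f_i(\mathbf{x})\,x_i$. *)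

(* Defs.v *)
From HB Require Import structures.
From mathcomp Require Import all_boot all_order all_algebra.
Set Implicit Arguments. Unset Strict Implicit. Unset Printing Implicit Defensive.
Import Order.TTheory GRing.Theory Num.Theory.
Local Open Scope ring_scope.

Section Median.
Variable R : realFieldType.
Variable n : nat.

(* entries of x sorted in decreasing order: x_(1) >= ... >= x_(n);
   x_(j) is nth 0 (sorted_dec x) (j-1) *)
Definition sorted_dec (x : 'I_n -> R) : seq R :=
  sort (fun a b : R => b <= a) [seq x i | i <- enum 'I_n].

(* Med x = (x_(k) + x_(k+1))/2 if n = 2k, x_(k+1) if n = 2k+1 *)
Definition Med (x : 'I_n -> R) : R :=
  let s := sorted_dec x in
  let k := n./2 in
  if odd n then nth 0 s k
  else (nth 0 s k.-1 + nth 0 s k) / 2%:R.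

Definition all_equal (x : 'I_n -> R) : bool :=
  [forall i, forall j, x i == x j].

Definition fw (x : 'I_n -> R) (i : 'I_n) : R :=
  if all_equal x then 1 / n%:R
  else 1 / (n.-1)%:R *
       (1 - `|x i - Med x| / \sum_(j < n) `|x j - Med x|).

Definition Hagg (x : 'I_n -> R) : R := \sum_(i < n) fw x i * x i.

End Median.

Definition in01 {R : realFieldType} (t : R) : bool := (0 <= t) && (t <= 1).

(* Main.v *)
Require Import Defs.
From HB Require Import structures.
From mathcomp Require Import all_boot all_order all_algebra.
From mathcomp Require Import zify ring.
Import Order.TTheory GRing.Theory Num.Theory.
Local Open Scope ring_scope.

Section Aux.
Variable R : realFieldType.
Variable n : nat.
Hypothesis hn : (2 <= n)%N.

Lemma Med_aff (x y : 'I_n -> R) (a b : R) : 0 < a ->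
  (forall i, y i = a * x i + b) -> Med y = a * Med x + b.
Proof.
move=> a0 hy.
have hs : sorted_dec y = map (fun t => a * t + b) (sorted_dec x).
  rewrite /sorted_dec.
  have -> : [seq y i | i <- enum 'I_n] =
            map (fun t => a * t + b) [seq x i | i <- enum 'I_n].
    by elim: (enum 'I_n) => //= i s ->; rewrite hy.
  symmetry; apply: map_sort => u v /=.
  by rewrite lerD2r ler_pM2l.
have sz : size (sorted_dec x) = n by rewrite size_sort size_map size_enum_ord.
have k1 : (n./2 < n)%N by rewrite -divn2 ltn_Pdiv //; lia.
have k2 : (n./2.-1 < n)%N by apply: leq_ltn_trans k1; apply: leq_pred.
have hn' : forall k, (k < n)%N -> nth 0 (sorted_dec y) k = a * nth 0 (sorted_dec x) k + b.
  by move=> k hk; rewrite hs; apply: nth_map; rewrite sz.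
rewrite /Med /= !hn' //.
case: ifP => // _.
field.
by [].

Qed.

Lemma all_equal_aff (x y : 'I_n -> R) (a b : R) : 0 < a ->
  (forall i, y i = a * x i + b) -> all_equal y = all_equal x.
Proof.
move=> a0 hy; rewrite /all_equal.
apply: eq_forallb => i; apply: eq_forallb => j.
by rewrite !hy (inj_eq (addIr b)) (inj_eq (mulfI _)) // gt_eqF.
Qed.

Lemma fw_aff (x y : 'I_n -> R) (a b : R) : 0 < a ->
  (forall i, y i = a * x i + b) -> forall i, fw y i = fw x i.
Proof.
move=> a0 hy i; rewrite /fw (all_equal_aff _ _ _ _ a0 hy) (Med_aff _ _ _ _ a0 hy).
case: ifP => // _.
have e : forall j, `|y j - (a * Med x + b)| = a * `|x j - Med x|.
  move=> j; rewrite hy.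
  have -> : a * x j + b - (a * Med x + b) = a * (x j - Med x) by ring.
  by rewrite normrM gtr0_norm.
rewrite e.
under eq_bigr => j _ do rewrite e.
rewrite -mulr_sumr.
case: (eqVneq (\sum_(j < n) `|x j - Med x|) 0) => [->|nz].
  by rewrite mulr0 !invr0 !mulr0.
congr (_ * (1 - _)).
by rewrite invfM mulrACA mulfV ?gt_eqF // mul1r.
Qed.

Lemma sum_fw (x : 'I_n -> R) : \sum_(i < n) fw x i = 1.
Proof.
have n0 : (n%:R : R) != 0 by rewrite pnatr_eq0; lia.
have n1 : ((n.-1)%:R : R) != 0 by rewrite pnatr_eq0; lia.
rewrite /fw; have [ae|ae] := boolP (all_equal x).
  by rewrite sumr_const card_ord div1r -[_ *+ n]mulr_natr mulVf.
rewrite -mulr_sumr sumrB sumr_const card_ord -mulr_suml.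
set S := \sum_(j < n) `|x j - Med x|.
have Snz : S != 0.
  apply/negP => /eqP S0; move/negP: ae; apply; rewrite /all_equal.
  have h : forall j, x j = Med x.
    move=> j; apply/eqP; rewrite -subr_eq0 -normr_eq0; apply/eqP.
    have := S0; rewrite /S => /eqP; rewrite psumr_eq0 => [/allP h|]; last by [].
    by apply/eqP; apply: h; rewrite mem_index_enum.
  by apply/forallP => i; apply/forallP => j; rewrite !h.
rewrite mulfV //.
have -> : (1 *+ n - 1 : R) = (n.-1)%:R.
  by rewrite -(prednK (ltnW hn)) mulrSr addrK.
by rewrite mul1r mulVf.
Qed.

Lemma Hagg_aff (x y : 'I_n -> R) (a b : R) : 0 < a ->
  (forall i, y i = a * x i + b) -> Hagg y = a * Hagg x + b.
Proof.
move=> a0 hy; rewrite /Hagg.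
under eq_bigr => i _ do rewrite (fw_aff _ _ _ _ a0 hy) hy mulrDr.
rewrite big_split /= -mulr_suml sum_fw mul1r mulr_sumr; congr (_ + _).
by apply: eq_bigr => i _; ring.
Qed.

End Aux.

Theorem corollary4 (R : realFieldType) (n : nat) (hn : (2 <= n)%N) :
  (forall (x : 'I_n -> R) (r : R),
      (forall i, in01 (x i)) ->
      -1 <= r <= 1 ->
      (forall i, in01 (x i + r)) ->
      in01 (Hagg x + r) ->
      Hagg (fun i => x i + r) = Hagg x + r)
  /\
  (forall (x : 'I_n -> R) (lam : R),
      (forall i, in01 (x i)) ->
      in01 lam ->
      Hagg (fun i => lam * x i) = lam * Hagg x).
Proof.
split.
  move=> x r _ _ _ _.
  by rewrite (@Hagg_aff R n hn x _ 1 r) ?ltr01 // ?mul1r // => i; rewrite mul1r.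
move=> x lam _ /andP [l0 _].
case: (eqVneq lam 0) => [->|lnz].
  rewrite mul0r /Hagg.
  have ae : all_equal (fun i : 'I_n => 0 * x i).
    by apply/forallP => i; apply/forallP => j; rewrite !mul0r.
  by apply: big1 => i _; rewrite mul0r mulr0.
have lp : 0 < lam by rewrite lt_def lnz.
by rewrite (@Hagg_aff R n hn x _ lam 0) ?addr0 // => i; rewrite addr0.
Qed.
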